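(* Let $r\ge2$, $\alpha_1,\dots,\alpha_r>0$, $m\ge1$, $f(z)=\mathrm{sgn}(z)\frac{|z|^m}{1+|z|^m}$, and consider $\dot x_1=f(x_r)-\alpha_1x_1$, $\dot x_j=x_{j-1}-\alpha_jx_j$ ($2\le j\le r$). Let $\phi=\prod_{i=1}^r\alpha_i$, $h(z)=f(z)/z$ for $z\ne0$, and $\mathcal{V}_0=(\prod_{i=2}^r\alpha_i,\prod_{i=3}^r\alpha_i,\dots,\alpha_r,1)^T$. Let $z\neq0$ with $h(z)=\phi$ (so that $z\mathcal{V}_0$ is an equilibrium). If $z>0$, then $z\mathcal{V}_0$ is asymptotically stable when $h'(z)<0$ and unstable when $h'(z)>0$. If $z<0$, then $z\mathcal{V}_0$ is asymptotically stable when $h'(z)>0$ and unstable when $h'(z)<0$.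
   Context: Unstable means not Lyapunov stable. An equilibrium $p$ is asymptotically stable if there is a neighborhood $N$ of $p$ such that solutions starting in $N$ converge to $p$ uniformly in the initial point in $N$. *)

(* Defs.v *)
From Stdlib Require Import Reals Lra.
From Coquelicot Require Import Coquelicot.
Open Scope R_scope.

Definition sgn (z : R) : R :=
  if Rlt_dec 0 z then 1 else if Rlt_dec z 0 then -1 else 0.

(* f(z) = sgn(z) |z|^m / (1 + |z|^m)  (real exponent m; for z = 0 the
   factor sgn 0 = 0 makes f 0 = 0 regardless of Rpower's value at 0) *)
Definition fhill (m z : R) : R :=
  sgn z * Rpower (Rabs z) m / (1 + Rpower (Rabs z) m).

Definition hfun (m z : R) : R := fhill m z / z.

Fixpoint prodR (a : nat -> R) (k n : nat) : R :=
  match n with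
  | O => 1
  | S n' => a k * prodR a (S k) n'
  end.

(* States are x : nat -> R; component j (0 <= j < r) stands for x_{j+1}. *)
Definition vfield (r : nat) (alpha : nat -> R) (m : R) (x : nat -> R)
  (j : nat) : R :=
  match j with
  | O => fhill m (x (r - 1)%nat) - alpha O * x O
  | S j' => x j' - alpha j * x j
  end.

Definition phi (r : nat) (alpha : nat -> R) : R := prodR alpha 0 r.

(* V0_j = prod_{i = j+2}^{r} alpha_i (1-indexed), i.e. with 0-indexed
   component j: product of alpha (j+1), ..., alpha (r-1). *)
Definition V0 (r : nat) (alpha : nat -> R) (j : nat) : R :=
  prodR alpha (S j) (r - 1 - j).

Definition is_solution (r : nat) (alpha : nat -> R) (m : R)
  (x : R -> nat -> R) : Prop :=
  forall t, 0 <= t -> forall j, (j < r)%nat ->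
    is_derive (fun s => x s j) t (vfield r alpha m (x t) j).

Definition lyap_stable (r : nat) (alpha : nat -> R) (m : R)
  (p : nat -> R) : Prop :=
  forall eps, 0 < eps -> exists delta, 0 < delta /\
    forall x, is_solution r alpha m x ->
      (forall j, (j < r)%nat -> Rabs (x 0 j - p j) < delta) ->
      forall t, 0 <= t -> forall j, (j < r)%nat -> Rabs (x t j - p j) < eps.

Definition unstable (r : nat) (alpha : nat -> R) (m : R)
  (p : nat -> R) : Prop := ~ lyap_stable r alpha m p.

Definition asymp_stable (r : nat) (alpha : nat -> R) (m : R)
  (p : nat -> R) : Prop :=
  exists delta, 0 < delta /\
    forall eps, 0 < eps -> exists T,
      forall x, is_solution r alpha m x ->
        (forall j, (j < r)%nat -> Rabs (x 0 j - p j) < delta) ->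
        forall t, T <= t -> forall j, (j < r)%nat -> Rabs (x t j - p j) < eps.

(* Main.v *)
Require Import Defs.
From Stdlib Require Import Reals.
From Coquelicot Require Import Coquelicot.
From Stdlib Require Import Lra Lia Classical Factorial.
Open Scope R_scope.

Lemma cont_eps (g : R -> R) (t : R) : continuous g t ->
  forall eps, 0 < eps -> exists d, 0 < d /\ forall s, Rabs (s - t) < d -> Rabs (g s - g t) < eps.
Proof.
  intros Hc eps He.
  apply continuity_pt_filterlim in Hc.
  destruct (Hc eps He) as [a [Ha H]].
  exists a; split; [lra|]. intros s Hs.
  destruct (Req_dec s t) as [->|Hne].
  - rewrite Rminus_diag, Rabs_R0; lra.
  - apply (H s). split; [split; [exact I|congruence]| exact Hs].
Qed.

Lemma lip_cont (g : R -> R) (M : R) :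
  (forall u v, Rabs (g u - g v) <= M * Rabs (u - v)) -> forall t, continuous g t.
Proof.
  intros H t. apply continuity_pt_filterlim.
  intros eps He. exists (eps / (Rabs M + 1)). split.
  - apply Rlt_gt, Rdiv_lt_0_compat; [lra| pose proof (Rabs_pos M); lra].
  - intros s [_ Hs]. simpl in *. unfold R_dist in *.
    eapply Rle_lt_trans; [apply H|].
    assert (Hp : 0 < Rabs M + 1) by (pose proof (Rabs_pos M); lra).
    apply Rle_lt_trans with (Rabs M * Rabs (s - t)).
    + apply Rmult_le_compat_r; [apply Rabs_pos| apply Rle_abs].
    + apply Rle_lt_trans with ((Rabs M + 1) * Rabs (s - t)).
      * pose proof (Rabs_pos (s - t)); nra.
      * apply Rlt_div_r in Hs; [|lra]. lra.
Qed.

Lemma mono_deriv (v dv : R -> R) (t1 : R) : 0 <= t1 ->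
  (forall s, 0 <= s <= t1 -> is_derive v s (dv s)) ->
  (forall s, 0 <= s <= t1 -> 0 <= dv s) -> v 0 <= v t1.
Proof.
  intros Ht Hd Hp.
  destruct (MVT_gen v 0 t1 dv) as [c [Hc He]].
  - intros x Hx. rewrite Rmin_left, Rmax_right in Hx by lra. apply Hd; lra.
  - intros x Hx. rewrite Rmin_left, Rmax_right in Hx by lra.
    apply continuity_pt_filterlim. apply (@ex_derive_continuous R_AbsRing R_NormedModule).
    eexists; apply Hd; lra.
  - rewrite Rmin_left, Rmax_right in Hc by lra.
    assert (0 <= dv c) by (apply Hp; lra). nra.
Qed.

Lemma is_derive_exp_lin (a s : R) : is_derive (fun s => exp (a * s)) s (a * exp (a * s)).
Proof. auto_derive; auto; ring. Qed.

(* v = exp(a s) u s - G s is nondecreasing *)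
Lemma exp_comp (u F G dG : R -> R) (a t1 : R) : 0 <= t1 ->
  (forall s, 0 <= s <= t1 -> is_derive u s (F s - a * u s)) ->
  (forall s, 0 <= s <= t1 -> is_derive G s (dG s)) ->
  (forall s, 0 <= s <= t1 -> dG s <= exp (a * s) * F s) ->
  u 0 - G 0 <= exp (a * t1) * u t1 - G t1.
Proof.
  intros Ht Hu HG Hle.
  assert (H := mono_deriv (fun s => exp (a * s) * u s - G s)
             (fun s => exp (a * s) * F s - dG s) t1 Ht).
  cbv beta in H. rewrite Rmult_0_r, exp_0, Rmult_1_l in H. apply H.
  - intros s Hs.
    assert (H1 := is_derive_mult _ _ _ _ _ (is_derive_exp_lin a s) (Hu s Hs) Rmult_comm).
    assert (H2 := is_derive_minus _ _ _ _ _ H1 (HG s Hs)).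
    replace (exp (a * s) * F s - dG s) with (minus (plus (mult (a * exp (a * s)) (u s)) (mult (exp (a * s)) (F s - a * u s))) (dG s)); [exact H2|].
    unfold minus, plus, opp, mult; simpl. ring.
  - intros s Hs. specialize (Hle s Hs). lra.
Qed.

Lemma exp_ge1 (x : R) : 0 <= x -> 1 <= exp x.
Proof. intros H. destruct (Req_dec x 0) as [->|]; [rewrite exp_0; lra|].
  pose proof (exp_ineq1 x H0); lra. Qed.

Lemma comp_lower (u F : R -> R) (a mu b W K t1 : R) :
  0 <= t1 -> 0 < a + mu -> 0 <= mu -> 0 < K ->
  (forall s, 0 <= s <= t1 -> is_derive u s (F s - a * u s)) ->
  (forall s, 0 <= s <= t1 -> b * K * exp (mu * s) <= F s) ->
  W * K < u 0 -> W * (a + mu) <= b -> W * K * exp (mu * t1) < u t1.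
Proof.
  intros Ht Ham Hmu HK Hu HF H0 HW.
  set (C := b * K / (a + mu)).
  assert (H := exp_comp u F (fun s => C * exp ((a + mu) * s))
     (fun s => b * K * exp ((a + mu) * s)) a t1 Ht Hu).
  cbv beta in H. rewrite Rmult_0_r, exp_0, Rmult_1_r in H.
  assert (Hc : W * K <= C).
  { unfold C. apply Rmult_le_reg_r with (a + mu); [lra|].
    replace (b * K / (a + mu) * (a + mu)) with (b * K) by (field; lra).
    replace (W * K * (a + mu)) with ((W * (a + mu)) * K) by ring.
    apply Rmult_le_compat_r; lra. }
  assert (HE : 1 <= exp ((a + mu) * t1)) by (apply exp_ge1; nra).
  assert (Hsplit : exp ((a + mu) * t1) = exp (a * t1) * exp (mu * t1))
    by (rewrite <- exp_plus; f_equal; ring).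
  assert (Hpos := exp_pos (a * t1)).
  assert (H' : u 0 - C <= exp (a * t1) * u t1 - C * exp ((a + mu) * t1)).
  { apply H.
    - intros s Hs. auto_derive; auto. unfold C. field. lra.
    - intros s Hs. specialize (HF s Hs).
      replace (exp ((a + mu) * s)) with (exp (a * s) * exp (mu * s))
        by (rewrite <- exp_plus; f_equal; ring).
      pose proof (exp_pos (a * s)). nra. }
  apply Rmult_lt_reg_l with (exp (a * t1)); [exact Hpos|].
  rewrite Hsplit in H'. nra.
Qed.

Lemma comp_upper (u F : R -> R) (a mu b W K t1 : R) :
  0 <= t1 -> 0 < a - mu -> 0 <= mu -> 0 < K ->
  (forall s, 0 <= s <= t1 -> is_derive u s (F s - a * u s)) ->
  (forall s, 0 <= s <= t1 -> Rabs (F s) <= b * K * exp (- mu * s)) ->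
  Rabs (u 0) < W * K -> b <= W * (a - mu) -> Rabs (u t1) < W * K * exp (- mu * t1).
Proof.
  intros Ht Ham Hmu HK Hu HF H0 HW.
  set (C := b * K / (a - mu)).
  assert (Hc : C <= W * K).
  { unfold C. apply Rmult_le_reg_r with (a - mu); [lra|].
    replace (b * K / (a - mu) * (a - mu)) with (b * K) by (field; lra).
    replace (W * K * (a - mu)) with ((W * (a - mu)) * K) by ring.
    apply Rmult_le_compat_r; lra. }
  assert (HE : 1 <= exp ((a - mu) * t1)) by (apply exp_ge1; nra).
  assert (Hsplit : exp ((a - mu) * t1) = exp (a * t1) * exp (- mu * t1))
    by (rewrite <- exp_plus; f_equal; ring).
  assert (Hpos := exp_pos (a * t1)).
  assert (HFs : forall s, 0 <= s <= t1 -> Rabs (exp (a * s) * F s) <= b * K * exp ((a - mu) * s)).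
  { intros s Hs. rewrite Rabs_mult, Rabs_right by (left; apply exp_pos).
    replace (exp ((a - mu) * s)) with (exp (a * s) * exp (- mu * s))
        by (rewrite <- exp_plus; f_equal; ring).
    specialize (HF s Hs). pose proof (exp_pos (a * s)). nra. }
  assert (H1 := exp_comp u F (fun s => - C * exp ((a - mu) * s))
     (fun s => - (b * K) * exp ((a - mu) * s)) a t1 Ht Hu).
  cbv beta in H1. rewrite Rmult_0_r, exp_0, Rmult_1_r in H1.
  assert (H1' : u 0 + C <= exp (a * t1) * u t1 + C * exp ((a - mu) * t1)).
  { assert (u 0 - - C <= exp (a * t1) * u t1 - - C * exp ((a - mu) * t1)); [|lra].
    apply H1.
    - intros s Hs. auto_derive; auto. unfold C. field. lra.
    - intros s Hs. specialize (HFs s Hs). apply Rabs_le_between in HFs. lra. }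
  assert (H2 := exp_comp (fun s => - u s) (fun s => - F s) (fun s => - C * exp ((a - mu) * s))
     (fun s => - (b * K) * exp ((a - mu) * s)) a t1 Ht).
  cbv beta in H2. rewrite Rmult_0_r, exp_0, Rmult_1_r in H2.
  assert (H2' : - u 0 + C <= exp (a * t1) * (- u t1) + C * exp ((a - mu) * t1)).
  { assert (- u 0 - - C <= exp (a * t1) * (- u t1) - - C * exp ((a - mu) * t1)); [|lra].
    apply H2.
    - intros s Hs. 
      replace (- F s - a * - u s) with (opp (F s - a * u s)) by (unfold opp; simpl; ring).
      apply (is_derive_opp (fun s => u s)). apply Hu; exact Hs.
    - intros s Hs. auto_derive; auto. unfold C. field. lra.
    - intros s Hs. specialize (HFs s Hs). apply Rabs_le_between in HFs. lra. }
  apply Rabs_def1.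
  - apply Rmult_lt_reg_l with (exp (a * t1)); [exact Hpos|].
    apply Rabs_def2 in H0. rewrite Hsplit in H2', H1'. nra.
  - apply Rmult_lt_reg_l with (exp (a * t1)); [exact Hpos|].
    apply Rabs_def2 in H0. rewrite Hsplit in H2', H1'. nra.
Qed.

Lemma fin_delta (n : nat) (P : nat -> R -> Prop) :
  (forall j d d', P j d -> 0 < d' <= d -> P j d') ->
  (forall j, (j < n)%nat -> exists d, 0 < d /\ P j d) ->
  exists d, 0 < d /\ forall j, (j < n)%nat -> P j d.
Proof.
  intros Hmon. induction n as [|n IH]; intros H.
  - exists 1; split; [lra| intros; lia].
  - destruct IH as [d1 [Hd1 H1]]. { intros j Hj; apply H; lia. }
    destruct (H n ltac:(lia)) as [d2 [Hd2 H2]].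
    exists (Rmin d1 d2). split; [apply Rmin_glb_lt; lra|].
    intros j Hj. destruct (Nat.eq_dec j n) as [->|Hne].
    + apply Hmon with d2; auto. split; [apply Rmin_glb_lt; lra| apply Rmin_r].
    + apply Hmon with d1; [apply H1; lia|]. split; [apply Rmin_glb_lt; lra| apply Rmin_l].
Qed.

Lemma cont_ind (n : nat) (g : nat -> R -> R) :
  (forall j t, (j < n)%nat -> 0 <= t -> continuous (g j) t) ->
  (forall j, (j < n)%nat -> g j 0 < 0) ->
  (forall t1, 0 <= t1 -> (forall s j, 0 <= s <= t1 -> (j < n)%nat -> g j s <= 0) ->
     forall j, (j < n)%nat -> g j t1 < 0) ->
  forall t j, 0 <= t -> (j < n)%nat -> g j t < 0.
Proof.
  intros Hc H0 Hstep t j Ht Hj.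
  destruct (Rlt_dec (g j t) 0) as [Hlt|Hge]; [exact Hlt|exfalso].
  set (E := fun t => 0 <= t /\ forall s j, 0 <= s <= t -> (j < n)%nat -> g j s < 0).
  assert (HEb : forall u, E u -> u <= t).
  { intros u [Hu Hu']. destruct (Rle_dec u t) as [|Hn]; [auto|].
    exfalso. specialize (Hu' t j ltac:(lra) Hj). lra. }
  assert (HE0 : E 0).
  { split; [lra|]. intros s k Hs Hk. replace s with 0 by lra. apply H0; exact Hk. }
  destruct (completeness E) as [T [HT1 HT2]].
  { exists t. intros u Hu. apply HEb; exact Hu. }
  { exists 0; exact HE0. }
  assert (HT0 : 0 <= T) by (apply HT1; exact HE0).
  assert (Hbelow : forall s k, 0 <= s < T -> (k < n)%nat -> g k s < 0).
  { intros s k Hs Hk.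
    destruct (classic (exists u, E u /\ s < u)) as [[u [[Hu0 Hu] Hsu]]|Hno].
    - apply Hu; [lra|exact Hk].
    - exfalso. assert (T <= s); [|lra]. apply HT2. intros u Hu.
      destruct (Rle_dec u s) as [|Hn]; [auto|]. exfalso; apply Hno; exists u; split; [auto|lra]. }
  assert (HTle : forall s k, 0 <= s <= T -> (k < n)%nat -> g k s <= 0).
  { intros s k Hs Hk. destruct (Rlt_dec s T) as [Hl|Hl]; [left; apply Hbelow; auto; lra|].
    replace s with T by lra.
    destruct (Req_dec T 0) as [->|HTn]; [left; apply H0; exact Hk|].
    destruct (Rle_dec (g k T) 0) as [|Hp]; [auto|exfalso].
    destruct (cont_eps (g k) T (Hc k T Hk HT0) (g k T) ltac:(lra)) as [d [Hd Hd']].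
    set (s' := Rmax 0 (T - d / 2)).
    assert (Hs' : 0 <= s' < T) by (unfold s'; split; [apply Rmax_l| apply Rmax_lub_lt; lra]).
    assert (Hd2 : Rabs (s' - T) < d).
    { unfold s'. apply Rabs_def1; [|]; unfold Rmax; destruct (Rle_dec 0 (T - d/2)); lra. }
    specialize (Hd' s' Hd2). specialize (Hbelow s' k Hs' Hk).
    apply Rabs_def2 in Hd'. lra. }
  assert (HTlt := Hstep T HT0 HTle).
  destruct (fin_delta n (fun k d => forall s, Rabs (s - T) < d -> g k s < 0)) as [d [Hd Hd']].
  { intros k d d' Hk Hdd s Hs. apply Hk. lra. }
  { intros k Hk. destruct (cont_eps (g k) T (Hc k T Hk HT0) (- g k T)) as [d [Hd Hd']].
    { specialize (HTlt k Hk); lra. }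
    exists d; split; [auto|]. intros s Hs. specialize (Hd' s Hs). apply Rabs_def2 in Hd'. lra. }
  assert (E (T + d / 2)).
  { split; [lra|]. intros s k Hs Hk. destruct (Rlt_dec s T) as [Hl|Hl].
    - apply Hbelow; auto; lra.
    - apply Hd'; [exact Hk|]. apply Rabs_def1; lra. }
  specialize (HT1 _ H). lra.
Qed.

Definition Gh (m s : R) := Rpower s m / (1 + Rpower s m).

Lemma Rpower_pos' (s m : R) : 0 < Rpower s m.
Proof. unfold Rpower. apply exp_pos. Qed.

Lemma fhill_pos (m u : R) : 0 < u -> fhill m u = Gh m u.
Proof. intros H. unfold fhill, Gh, sgn. destruct (Rlt_dec 0 u); [|lra].
  rewrite Rabs_right by lra. field. pose proof (Rpower_pos' u m); lra. Qed.

Lemma fhill_neg (m u : R) : u < 0 -> fhill m u = - Gh m (- u).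
Proof. intros H. unfold fhill, Gh, sgn. destruct (Rlt_dec 0 u); [lra|].
  destruct (Rlt_dec u 0); [|lra].
  rewrite Rabs_left by lra. field. pose proof (Rpower_pos' (-u) m); lra. Qed.

Lemma fhill_0 (m : R) : fhill m 0 = 0.
Proof. unfold fhill, sgn. destruct (Rlt_dec 0 0); [lra|]. destruct (Rlt_dec 0 0); [lra|].
  unfold Rdiv; ring. Qed.

Lemma frac_mono (a b : R) : 0 <= a <= b -> a / (1 + a) <= b / (1 + b).
Proof. intros H. apply Rmult_le_reg_r with ((1 + a) * (1 + b)); [nra|].
  replace (a / (1 + a) * ((1 + a) * (1 + b))) with (a * (1 + b)) by (field; lra).
  replace (b / (1 + b) * ((1 + a) * (1 + b))) with (b * (1 + a)) by (field; lra). nra. Qed.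

Lemma Gh_mono (m s t : R) : 0 <= m -> 0 < s <= t -> Gh m s <= Gh m t.
Proof. intros Hm H. unfold Gh. apply frac_mono. split; [left; apply Rpower_pos'|].
  apply Rle_Rpower_l; auto. Qed.

Lemma exp_le' (x y : R) : x <= y -> exp x <= exp y.
Proof. intros H. destruct (Rle_lt_or_eq_dec _ _ H) as [Hl| ->]; [left; apply exp_increasing; auto| lra]. Qed.

Lemma Rpower_le1 (c e : R) : 0 < c <= 1 -> 0 <= e -> Rpower c e <= 1.
Proof. intros Hc He. unfold Rpower. rewrite <- exp_0.
  destruct (Rle_lt_or_eq_dec _ _ (proj2 Hc)) as [Hl| ->].
  - assert (ln c < 0) by (rewrite <- ln_1; apply ln_increasing; lra).
    apply exp_le'; nra.
  - rewrite ln_1, Rmult_0_r. lra. Qed.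

Lemma Gh_lt1 (m s : R) : 0 <= Gh m s < 1.
Proof. unfold Gh. pose proof (Rpower_pos' s m). split.
  - apply Rdiv_le_0_compat; lra.
  - apply Rmult_lt_reg_r with (1 + Rpower s m); [lra|].
    replace (Rpower s m / (1 + Rpower s m) * (1 + Rpower s m)) with (Rpower s m) by (field; lra). lra. Qed.

Lemma Gh_le_lin (m s : R) : 1 <= m -> 0 < s -> Gh m s <= m * s.
Proof. intros Hm Hs. destruct (Rle_dec 1 s) as [H1|H1].
  - pose proof (Gh_lt1 m s). nra.
  - assert (HE : Rpower s m <= s).
    { rewrite <- (Rpower_1 s) at 2 by lra. unfold Rpower. apply exp_le'.
      assert (ln s < 0) by (rewrite <- ln_1; apply ln_increasing; lra). nra. }
    unfold Gh. pose proof (Rpower_pos' s m).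
    apply Rle_trans with (Rpower s m).
    + apply Rmult_le_reg_r with (1 + Rpower s m); [lra|].
      replace (Rpower s m / (1 + Rpower s m) * (1 + Rpower s m)) with (Rpower s m) by (field; lra). nra.
    + nra. Qed.

Lemma Rpower_deriv (m c : R) : 0 < c -> is_derive (fun x => Rpower x m) c (m * Rpower c (m - 1)).
Proof. intros Hc. apply is_derive_Reals. apply derivable_pt_lim_power; auto. Qed.

Lemma Gh_lip_le (m s t : R) : 1 <= m -> 0 < s <= t -> Gh m t - Gh m s <= m * (t - s).
Proof.
  intros Hm Hst.
  destruct (MVT_gen (fun x => Rpower x m) s t (fun c => m * Rpower c (m - 1))) as [c [Hc He]].
  - intros x Hx. rewrite Rmin_left, Rmax_right in Hx by lra. apply Rpower_deriv; lra.
  - intros x Hx. rewrite Rmin_left, Rmax_right in Hx by lra.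
    apply continuity_pt_filterlim. apply (@ex_derive_continuous R_AbsRing R_NormedModule (fun x => Rpower x m)).
    exists (m * Rpower x (m - 1)); apply (Rpower_deriv m x); lra.
  - rewrite Rmin_left, Rmax_right in Hc by lra. cbv beta in He.
    set (Et := Rpower t m) in *. set (Es := Rpower s m) in *.
    assert (HEt : 0 < Et) by apply Rpower_pos'. assert (HEs : 0 < Es) by apply Rpower_pos'.
    assert (HEE : 0 < Et * Es) by (apply Rmult_lt_0_compat; auto).
    assert (Hb : Rpower c (m - 1) <= (1 + Et) * (1 + Es)).
    { destruct (Rle_dec c 1) as [H1|H1].
      - assert (Rpower c (m - 1) <= 1) by (apply Rpower_le1; [split|]; lra). nra.
      - assert (Rpower c (m - 1) <= Rpower c m) by (apply Rle_Rpower; lra).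
        assert (Rpower c m <= Et) by (apply Rle_Rpower_l; lra). nra. }
    unfold Gh. fold Et Es.
    replace (Et / (1 + Et) - Es / (1 + Es)) with ((Et - Es) / ((1 + Et) * (1 + Es))) by (field; lra).
    rewrite He. apply Rmult_le_reg_r with ((1 + Et) * (1 + Es)); [nra|].
    replace (m * Rpower c (m - 1) * (t - s) / ((1 + Et) * (1 + Es)) * ((1 + Et) * (1 + Es)))
      with (m * Rpower c (m - 1) * (t - s)) by (field; nra).
    assert (0 <= m * (t - s)) by nra.
    assert (1 <= (1 + Et) * (1 + Es)) by nra. nra.
Qed.

Lemma Gh_lip (m s t : R) : 1 <= m -> 0 < s -> 0 < t -> Rabs (Gh m t - Gh m s) <= m * Rabs (t - s).
Proof.
  intros Hm Hs Ht. destruct (Rle_dec s t).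
  - rewrite Rabs_right by (pose proof (Gh_mono m s t); lra).
    rewrite (Rabs_right (t - s)) by lra. apply Gh_lip_le; lra.
  - rewrite Rabs_left1 by (pose proof (Gh_mono m t s); lra).
    rewrite (Rabs_left1 (t - s)) by lra.
    pose proof (Gh_lip_le m t s Hm ltac:(lra)). lra.
Qed.

Lemma fhill_lip (m u v : R) : 1 <= m -> Rabs (fhill m u - fhill m v) <= m * Rabs (u - v).
Proof.
  intros Hm.
  assert (Hgen : forall u v, 0 < u -> v <= 0 -> Rabs (fhill m u - fhill m v) <= m * Rabs (u - v)).
  { clear u v. intros u v Hu Hv. rewrite fhill_pos by auto.
    assert (H1 := Gh_le_lin m u Hm Hu). assert (H1' := Gh_lt1 m u).
    rewrite (Rabs_right (u - v)) by lra.
    destruct (Req_dec v 0) as [->|Hv0].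
    - rewrite fhill_0. rewrite Rabs_right by lra. lra.
    - rewrite fhill_neg by lra.
      assert (H2 := Gh_le_lin m (- v) Hm ltac:(lra)). assert (H2' := Gh_lt1 m (- v)).
      rewrite Rabs_right by lra. lra. }
  destruct (Rlt_dec 0 u) as [Hu|Hu]; destruct (Rlt_dec 0 v) as [Hv|Hv].
  - rewrite !fhill_pos by auto. apply Gh_lip; auto.
  - apply Hgen; lra.
  - rewrite Rabs_minus_sym, (Rabs_minus_sym u). apply Hgen; lra.
  - destruct (Req_dec u 0) as [->|Hu0]; destruct (Req_dec v 0) as [->|Hv0].
    + rewrite fhill_0, Rminus_diag, !Rabs_R0. lra.
    + rewrite fhill_0, (fhill_neg m v) by lra. rewrite Rminus_0_l, Ropp_involutive, Rminus_0_l, Rabs_Ropp.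
      rewrite (Rabs_left v) by lra. pose proof (Gh_le_lin m (-v) Hm ltac:(lra)).
      pose proof (Gh_lt1 m (-v)). rewrite Rabs_right by lra. lra.
    + rewrite fhill_0, (fhill_neg m u) by lra. rewrite Rminus_0_r, Rabs_Ropp, Rminus_0_r.
      rewrite (Rabs_left u) by lra. pose proof (Gh_le_lin m (-u) Hm ltac:(lra)).
      pose proof (Gh_lt1 m (-u)). rewrite Rabs_right by lra. lra.
    + rewrite !fhill_neg by lra.
      replace (- Gh m (- u) - - Gh m (- v)) with (- (Gh m (- u) - Gh m (- v))) by ring.
      rewrite Rabs_Ropp. replace (u - v) with (- (- u - - v)) by ring. rewrite Rabs_Ropp.
      apply Gh_lip; lra.
Qed.

Lemma fhill_deriv (m z d : R) : z <> 0 -> is_derive (hfun m) z d ->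
  is_derive (fhill m) z (hfun m z + z * d).
Proof.
  intros Hz Hd.
  assert (H := is_derive_mult (fun x => x) (hfun m) z 1 d (is_derive_id z) Hd Rmult_comm).
  eapply is_derive_ext_loc in H.
  - replace (hfun m z + z * d) with (plus (mult 1 (hfun m z)) (mult z d)) by (unfold plus, mult; simpl; ring).
    exact H.
  - assert (Hp : 0 < Rabs z) by (apply Rabs_pos_lt; auto).
    exists (mkposreal _ Hp). intros y Hy. simpl.
    assert (y <> 0).
    { intros ->. unfold ball in Hy; simpl in Hy. unfold AbsRing_ball, abs, minus, plus, opp in Hy; simpl in Hy.
      rewrite Rplus_0_l, Rabs_Ropp in Hy. lra. }
    unfold mult, hfun; simpl. field. auto.
Qed.

Lemma fhill_locmono (m z : R) : z <> 0 -> 1 <= m ->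
  exists del, 0 < del /\ forall h, 0 < h < del -> fhill m z <= fhill m (z + h).
Proof.
  intros Hz Hm. destruct (Rlt_dec 0 z) as [Hp|Hn].
  - exists 1. split; [lra|]. intros h Hh. rewrite !fhill_pos by lra. apply Gh_mono; lra.
  - exists (- z). split; [lra|]. intros h Hh. rewrite !fhill_neg by lra.
    assert (Gh m (- (z + h)) <= Gh m (- z)) by (apply Gh_mono; lra). lra.
Qed.

Lemma deriv_nonneg (f : R -> R) (z c : R) : is_derive f z c ->
  (exists del, 0 < del /\ forall h, 0 < h < del -> f z <= f (z + h)) -> 0 <= c.
Proof.
  intros Hd [del [Hdel Hm]]. apply is_derive_Reals in Hd.
  destruct (Rle_dec 0 c) as [|Hc]; [auto|exfalso].
  destruct (Hd (- c) ltac:(lra)) as [dl Hdl].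
  set (h := Rmin (del / 2) (dl / 2)).
  assert (Hh : 0 < h) by (unfold h; apply Rmin_glb_lt; destruct dl; simpl; lra).
  assert (Hh1 : h < del) by (unfold h; pose proof (Rmin_l (del/2) (dl/2)); lra).
  assert (Hh2 : h < dl) by (unfold h; pose proof (Rmin_r (del/2) (dl/2)); destruct dl; simpl in *; lra).
  specialize (Hdl h ltac:(lra) ltac:(rewrite Rabs_right; lra)).
  specialize (Hm h ltac:(lra)).
  assert (0 <= (f (z + h) - f z) / h) by (apply Rdiv_le_0_compat; lra).
  apply Rabs_def2 in Hdl. lra.
Qed.

Lemma deriv_upper (f : R -> R) (z c c' : R) : is_derive f z c -> 0 <= c -> c < c' ->
  exists eta, 0 < eta /\ forall u, Rabs u <= eta -> Rabs (f (z + u) - f z) <= c' * Rabs u.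
Proof.
  intros Hd Hc Hcc. apply is_derive_Reals in Hd.
  destruct (Hd (c' - c) ltac:(lra)) as [dl Hdl].
  exists (dl / 2). split; [destruct dl; simpl; lra|].
  intros u Hu. destruct (Req_dec u 0) as [->|Hu0].
  - rewrite Rplus_0_r, Rminus_diag, !Rabs_R0. lra.
  - specialize (Hdl u Hu0 ltac:(destruct dl; simpl in *; lra)).
    apply Rabs_def2 in Hdl.
    replace (f (z + u) - f z) with ((f (z + u) - f z) / u * u) by (field; auto).
    rewrite Rabs_mult. apply Rmult_le_compat_r; [apply Rabs_pos|].
    apply Rabs_le. lra.
Qed.

Lemma deriv_lower (f : R -> R) (z c c' : R) : is_derive f z c -> c' < c ->
  exists eta, 0 < eta /\ forall u, 0 <= u <= eta -> c' * u <= f (z + u) - f z.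
Proof.
  intros Hd Hcc. apply is_derive_Reals in Hd.
  destruct (Hd (c - c') ltac:(lra)) as [dl Hdl].
  exists (dl / 2). split; [destruct dl; simpl; lra|].
  intros u Hu. destruct (Req_dec u 0) as [->|Hu0].
  - rewrite Rplus_0_r, Rminus_diag. lra.
  - specialize (Hdl u Hu0 ltac:(rewrite Rabs_right by lra; destruct dl; simpl in *; lra)).
    apply Rabs_def2 in Hdl.
    replace (f (z + u) - f z) with ((f (z + u) - f z) / u * u) by (field; auto).
    apply Rmult_le_compat_r; lra.
Qed.

Lemma prodR_snoc (a : nat -> R) (n k : nat) : prodR a k (S n) = prodR a k n * a (k + n)%nat.
Proof.
  revert k. induction n as [|n IH]; intros k.
  - simpl. rewrite Nat.add_0_r. ring.
  - change (prodR a k (S (S n))) with (a k * prodR a (S k) (S n)). rewrite IH.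
    simpl. replace (S (k + n)) with (k + S n)%nat by lia. ring.
Qed.

Lemma prodR_pos (a : nat -> R) (n k : nat) :
  (forall i, (k <= i)%nat -> (i < k + n)%nat -> 0 < a i) -> 0 < prodR a k n.
Proof.
  revert k. induction n as [|n IH]; intros k H; simpl; [lra|].
  apply Rmult_lt_0_compat; [apply H; lia|]. apply IH. intros i Hi Hi'. apply H; lia.
Qed.

Lemma prodR_pert (a : nat -> R) (n k : nat) : exists B, 0 <= B /\ forall mu, Rabs mu <= 1 ->
  Rabs (prodR (fun i => a i + mu) k n - prodR a k n) <= Rabs mu * B.
Proof.
  revert k. induction n as [|n IH]; intros k.
  - exists 0. split; [lra|]. intros mu _. simpl. rewrite Rminus_diag, Rabs_R0. lra.
  - destruct (IH (S k)) as [B [HB H]].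
    exists (Rabs (a k) * B + B + Rabs (prodR a (S k) n)). split.
    { pose proof (Rabs_pos (a k)); pose proof (Rabs_pos (prodR a (S k) n)); nra. }
    intros mu Hmu. simpl. specialize (H mu Hmu).
    set (Pm := prodR (fun i => a i + mu) (S k) n) in *. set (P := prodR a (S k) n) in *.
    replace ((a k + mu) * Pm - a k * P) with (a k * (Pm - P) + mu * (Pm - P) + mu * P) by ring.
    eapply Rle_trans; [apply Rabs_triang|]. eapply Rle_trans; [apply Rplus_le_compat_r, Rabs_triang|].
    rewrite !Rabs_mult.
    pose proof (Rabs_pos mu). pose proof (Rabs_pos (a k)). pose proof (Rabs_pos (Pm - P)).
    pose proof (Rabs_pos P).
    assert (Rabs (a k) * Rabs (Pm - P) <= Rabs (a k) * (Rabs mu * B)) by (apply Rmult_le_compat_l; auto).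
    assert (Rabs mu * Rabs (Pm - P) <= 1 * (Rabs mu * B)) by (apply Rmult_le_compat; auto).
    nra.
Qed.

Lemma fin_ub (w : nat -> R) (n : nat) : exists M, 0 < M /\ forall j, (j < n)%nat -> w j <= M.
Proof.
  induction n as [|n [M [HM H]]].
  - exists 1; split; [lra|intros; lia].
  - exists (Rmax M (Rabs (w n)) + 1). split.
    { pose proof (Rmax_l M (Rabs (w n))). lra. }
    intros j Hj. destruct (Nat.eq_dec j n) as [->|].
    + pose proof (Rmax_r M (Rabs (w n))). pose proof (Rle_abs (w n)). lra.
    + pose proof (Rmax_l M (Rabs (w n))). specialize (H j ltac:(lia)). lra.
Qed.

Lemma fin_lb (w : nat -> R) (n : nat) : (forall j, (j < n)%nat -> 0 < w j) ->
  exists M, 0 < M /\ forall j, (j < n)%nat -> M <= w j.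
Proof.
  induction n as [|n IH]; intros Hp.
  - exists 1; split; [lra|intros; lia].
  - destruct IH as [M [HM H]]. { intros; apply Hp; lia. }
    exists (Rmin M (w n)). split.
    { apply Rmin_glb_lt; auto. }
    intros j Hj. destruct (Nat.eq_dec j n) as [->|].
    + apply Rmin_r.
    + pose proof (Rmin_l M (w n)). specialize (H j ltac:(lia)). lra.
Qed.

Lemma V0_last (r : nat) (alpha : nat -> R) : V0 r alpha (r - 1) = 1.
Proof. unfold V0. replace (r - 1 - (r - 1))%nat with 0%nat by lia. reflexivity. Qed.

Lemma V0_step (r : nat) (alpha : nat -> R) (j : nat) : (1 <= j)%nat -> (j < r)%nat ->
  V0 r alpha (j - 1) = alpha j * V0 r alpha j.
Proof.
  intros H1 H2. unfold V0. replace (r - 1 - (j - 1))%nat with (S (r - 1 - j)) by lia.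
  replace (S (j - 1)) with j by lia. reflexivity.
Qed.

Lemma phi_eq (r : nat) (alpha : nat -> R) : (1 <= r)%nat -> phi r alpha = alpha 0%nat * V0 r alpha 0.
Proof.
  intros H. unfold phi, V0. destruct r as [|r2]; [lia|]. simpl. do 2 f_equal. lia.
Qed.

Lemma is_derive_sub_const (g : R -> R) (t l c : R) : is_derive g t l -> is_derive (fun s => g s - c) t l.
Proof.
  intros H. assert (H2 := is_derive_minus g (fun _ => c) t l 0 H (is_derive_const c t)).
  replace l with (minus l 0) by (unfold minus, plus, opp; simpl; ring). exact H2.
Qed.

Lemma q_dyn (r : nat) (alpha : nat -> R) (m z : R) (x : R -> nat -> R) :
  (1 <= r)%nat -> z <> 0 -> hfun m z = phi r alpha -> is_solution r alpha m x ->
  forall t, 0 <= t ->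
  is_derive (fun s => x s 0%nat - z * V0 r alpha 0) t
    ((fhill m (z + (x t (r - 1)%nat - z * V0 r alpha (r - 1))) - fhill m z)
      - alpha 0%nat * (x t 0%nat - z * V0 r alpha 0)) /\
  forall j, (1 <= j)%nat -> (j < r)%nat ->
    is_derive (fun s => x s j - z * V0 r alpha j) t
      ((x t (j - 1)%nat - z * V0 r alpha (j - 1)) - alpha j * (x t j - z * V0 r alpha j)).
Proof.
  intros Hr Hz Hh Hs t Ht. split.
  - assert (H := Hs t Ht 0%nat ltac:(lia)). apply is_derive_sub_const with (c := z * V0 r alpha 0) in H.
    simpl in H. replace ((fhill m (z + (x t (r - 1)%nat - z * V0 r alpha (r - 1))) - fhill m z)
      - alpha 0%nat * (x t 0%nat - z * V0 r alpha 0)) with (fhill m (x t (r - 1)%nat) - alpha 0%nat * x t 0%nat).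
    + exact H.
    + rewrite V0_last. replace (z + (x t (r - 1)%nat - z * 1)) with (x t (r - 1)%nat) by ring.
      assert (Hf : fhill m z = z * hfun m z) by (unfold hfun; field; auto).
      rewrite Hf, Hh, phi_eq by auto. ring.
  - intros j H1 H2. assert (H := Hs t Ht j H2). apply is_derive_sub_const with (c := z * V0 r alpha j) in H.
    destruct j as [|j']; [lia|]. simpl in H. simpl. replace (j' - 0)%nat with j' by lia.
    replace ((x t j' - z * V0 r alpha j') - alpha (S j') * (x t (S j') - z * V0 r alpha (S j')))
      with (x t j' - alpha (S j') * x t (S j')); [exact H|].
    assert (HV := V0_step r alpha (S j') H1 H2). simpl in HV. replace (j' - 0)%nat with j' in HV by lia.
    rewrite HV. ring.
Qed.

Lemma cont_of_deriv (u : R -> R) (t l : R) : is_derive u t l -> continuous u t.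
Proof. intros H. apply (@ex_derive_continuous R_AbsRing R_NormedModule u). exists l; exact H. Qed.

Lemma cont_abs_exp (u : R -> R) (A mu t : R) : continuous u t ->
  continuous (fun s => Rabs (u s) - A * exp (mu * s)) t.
Proof.
  intros Hu. apply continuity_pt_filterlim. apply continuity_pt_minus.
  - apply (continuity_pt_comp u Rabs); [apply continuity_pt_filterlim; exact Hu| apply Rcontinuity_abs].
  - apply continuity_pt_filterlim.
    apply (@ex_derive_continuous R_AbsRing R_NormedModule (fun s => A * exp (mu * s))).
    auto_derive; auto.
Qed.

Lemma cont_exp_minus (u : R -> R) (A mu t : R) : continuous u t ->
  continuous (fun s => A * exp (mu * s) - u s) t.
Proof.
  intros Hu. apply continuity_pt_filterlim. apply continuity_pt_minus.
  - apply continuity_pt_filterlim.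
    apply (@ex_derive_continuous R_AbsRing R_NormedModule (fun s => A * exp (mu * s))).
    auto_derive; auto.
  - apply continuity_pt_filterlim; exact Hu.
Qed.

Lemma exp_neg_bound (mu t : R) : 0 <= mu * t -> exp (- mu * t) * (1 + mu * t) <= 1.
Proof.
  intros H. pose proof (exp_ineq1_le (mu * t)).
  assert (Hm : exp (- mu * t) * exp (mu * t) = 1) by (rewrite <- exp_plus; replace (- mu * t + mu * t) with 0 by ring; apply exp_0).
  pose proof (exp_pos (- mu * t)). nra.
Qed.

Lemma weights_rel (a : nat -> R) (j : nat) : (1 <= j)%nat -> 0 < prodR a 1 j ->
  0 < prodR a 1 (j - 1) -> / prodR a 1 (j - 1) = / prodR a 1 j * a j.
Proof.
  intros H1 Hp Hp'.
  assert (HP : prodR a 1 j = prodR a 1 (j - 1) * a j).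
  { replace j with (S (j - 1)) at 1 by lia. rewrite prodR_snoc. do 2 f_equal. lia. }
  rewrite HP in *. field. split; [|lra]. intros Ha. rewrite Ha in Hp. lra.
Qed.

Lemma prodR_first (a : nat -> R) (r : nat) : (1 <= r)%nat -> prodR a 0 r = a 0%nat * prodR a 1 (r - 1).
Proof. intros H. destruct r; [lia|]. simpl. do 2 f_equal. lia. Qed.

Lemma stable_main (r : nat) (alpha : nat -> R) (m z c : R) :
  (2 <= r)%nat -> (forall i, (i < r)%nat -> 0 < alpha i) -> 1 <= m -> z <> 0 ->
  hfun m z = phi r alpha -> is_derive (fhill m) z c -> 0 <= c -> c < phi r alpha ->
  asymp_stable r alpha m (fun j => z * V0 r alpha j).
Proof.
  intros Hr Ha Hm Hz Hh Hd Hc0 Hcp.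
  assert (Hph : 0 < phi r alpha) by (unfold phi; apply prodR_pos; intros; apply Ha; lia).
  set (c' := (c + phi r alpha) / 2).
  destruct (deriv_upper (fhill m) z c c' Hd Hc0 ltac:(unfold c'; lra)) as [eta [Heta Hf]].
  destruct (prodR_pert alpha r 0) as [B [HB HBp]].
  destruct (fin_lb alpha r Ha) as [amin [Hamin Hamin']].
  set (mu := Rmin (Rmin 1 (amin / 2)) ((phi r alpha - c') / (B + 1))).
  assert (Hmu0 : 0 < mu).
  { unfold mu. apply Rmin_glb_lt; [apply Rmin_glb_lt; lra|]. apply Rdiv_lt_0_compat; unfold c'; lra. }
  assert (Hmu1 : mu <= 1) by (unfold mu; eapply Rle_trans; [apply Rmin_l| apply Rmin_l]).
  assert (Hmu2 : mu <= amin / 2) by (unfold mu; eapply Rle_trans; [apply Rmin_l| apply Rmin_r]).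
  assert (Hmu3 : mu <= (phi r alpha - c') / (B + 1)) by (unfold mu; apply Rmin_r).
  set (a := fun i => alpha i + - mu).
  assert (Hapos : forall i, (i < r)%nat -> 0 < a i)
    by (intros i Hi; unfold a; specialize (Hamin' i Hi); lra).
  assert (Hprod : c' <= prodR a 0 r).
  { specialize (HBp (- mu) ltac:(rewrite Rabs_Ropp, Rabs_right; lra)).
    fold a in HBp. rewrite Rabs_Ropp, (Rabs_right mu) in HBp by lra.
    apply Rabs_le_between in HBp.
    assert (H := Rmult_le_compat_r (B + 1) _ _ ltac:(lra) Hmu3).
    replace ((phi r alpha - c') / (B + 1) * (B + 1)) with (phi r alpha - c') in H by (field; lra).
    unfold phi in *. nra. }
  assert (HPpos : forall j, (j < r)%nat -> 0 < prodR a 1 j)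
    by (intros; apply prodR_pos; intros; apply Hapos; lia).
  set (W := fun j => / prodR a 1 j).
  assert (HWpos : forall j, (j < r)%nat -> 0 < W j) by (intros; unfold W; apply Rinv_0_lt_compat; auto).
  destruct (fin_ub W r) as [Wmax [HWmax HWmax']].
  destruct (fin_lb W r HWpos) as [Wmin [HWmin HWmin']].
  set (K := eta / Wmax).
  assert (HK : 0 < K) by (unfold K; apply Rdiv_lt_0_compat; lra).
  assert (HWK : Wmax * K = eta) by (unfold K; field; lra).
  exists (Wmin * K). split; [nra|].
  intros eps Heps. exists (Wmax * K / (eps * mu)).
  intros x Hx H0.
  assert (Hbar : forall t j, 0 <= t -> (j < r)%nat ->
     Rabs (x t j - z * V0 r alpha j) - W j * K * exp (- mu * t) < 0).
  { apply (cont_ind r (fun j t => Rabs (x t j - z * V0 r alpha j) - W j * K * exp (- mu * t))).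
    - intros j t Hj Ht. apply cont_abs_exp.
      apply cont_of_deriv with (l := vfield r alpha m (x t) j).
      apply is_derive_sub_const. apply Hx; auto.
    - intros j Hj. rewrite Rmult_0_r, exp_0, Rmult_1_r.
      specialize (H0 j Hj). specialize (HWmin' j Hj). nra.
    - intros t1 Ht1 Hle j Hj. cbv beta in Hle |- *.
      assert (Hle' : forall s j, 0 <= s <= t1 -> (j < r)%nat ->
                Rabs (x s j - z * V0 r alpha j) <= W j * K * exp (- mu * s))
        by (intros s j' Hs Hj'; specialize (Hle s j' Hs Hj'); lra).
      assert (Hdyn := q_dyn r alpha m z x ltac:(lia) Hz Hh Hx).
      cut (Rabs (x t1 j - z * V0 r alpha j) < W j * K * exp (- mu * t1)); [lra|].
      destruct j as [|j'].
      + apply (comp_upper (fun s => x s 0%nat - z * V0 r alpha 0)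
          (fun s => fhill m (z + (x s (r - 1)%nat - z * V0 r alpha (r - 1))) - fhill m z)
          (alpha 0%nat) mu (c' * W (r - 1)%nat) (W 0%nat) K t1 Ht1).
        * specialize (Hapos 0%nat ltac:(lia)). unfold a in Hapos. lra.
        * lra.
        * exact HK.
        * intros s Hs. apply (proj1 (Hdyn s ltac:(lra))).
        * intros s Hs. specialize (Hle' s (r - 1)%nat Hs ltac:(lia)).
          assert (Hq : Rabs (x s (r - 1)%nat - z * V0 r alpha (r - 1)) <= eta).
          { assert (exp (- mu * s) <= 1) by (rewrite <- exp_0; apply exp_le'; nra).
            specialize (HWmax' (r - 1)%nat ltac:(lia)). specialize (HWpos (r - 1)%nat ltac:(lia)).
            apply Rle_trans with (W (r - 1)%nat * K * exp (- mu * s)); [auto|]. rewrite <- HWK.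
            assert (W (r - 1)%nat * K * exp (- mu * s) <= W (r - 1)%nat * K * 1)
              by (apply Rmult_le_compat_l; nra).
            assert (W (r - 1)%nat * K <= Wmax * K) by (apply Rmult_le_compat_r; lra). lra. }
          specialize (Hf _ Hq). assert (0 <= c') by (unfold c'; lra). nra.
        * specialize (H0 0%nat ltac:(lia)). specialize (HWmin' 0%nat ltac:(lia)). cbv beta in H0. nra.
        * unfold W. simpl. rewrite Rinv_1, Rmult_1_l.
          rewrite (prodR_first a r) in Hprod by lia.
          specialize (HPpos (r - 1)%nat ltac:(lia)).
          apply Rmult_le_reg_r with (prodR a 1 (r - 1)); [auto|].
          replace (c' * / prodR a 1 (r - 1) * prodR a 1 (r - 1)) with c' by (field; lra).
          replace (alpha 0%nat - mu) with (a 0%nat) by (unfold a; ring). lra.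
      + set (j := S j') in *.
        apply (comp_upper (fun s => x s j - z * V0 r alpha j)
          (fun s => x s (j - 1)%nat - z * V0 r alpha (j - 1))
          (alpha j) mu (W (j - 1)%nat) (W j) K t1 Ht1).
        * specialize (Hapos j Hj). unfold a in Hapos. lra.
        * lra.
        * exact HK.
        * intros s Hs. apply (proj2 (Hdyn s ltac:(lra)) j ltac:(unfold j; lia) Hj).
        * intros s Hs. apply (Hle' s (j - 1)%nat Hs ltac:(lia)).
        * specialize (H0 j Hj). specialize (HWmin' j Hj). cbv beta in H0. nra.
        * unfold W. rewrite weights_rel; [| unfold j; lia | apply HPpos; auto | apply HPpos; lia].
          unfold a. lra. }
  intros t HT j Hj.
  assert (Ht : 0 <= t).
  { assert (0 <= Wmax * K / (eps * mu)) by (apply Rdiv_le_0_compat; nra). lra. }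
  specialize (Hbar t j Ht Hj). specialize (HWmax' j Hj).
  assert (HE := exp_neg_bound mu t ltac:(nra)).
  assert (HE0 := exp_pos (- mu * t)).
  assert (HT' : Wmax * K <= eps * mu * t).
  { apply Rmult_le_compat_l with (r := eps * mu) in HT; [|nra].
    replace (eps * mu * (Wmax * K / (eps * mu))) with (Wmax * K) in HT by (field; lra). lra. }
  assert (W j * K * exp (- mu * t) <= Wmax * K * exp (- mu * t)) by (apply Rmult_le_compat_r; [lra|]; nra).
  nra.
Qed.

Lemma unstable_main (r : nat) (alpha : nat -> R) (m z c : R) :
  (2 <= r)%nat -> (forall i, (i < r)%nat -> 0 < alpha i) -> z <> 0 ->
  hfun m z = phi r alpha -> is_derive (fhill m) z c -> phi r alpha < c ->
  (forall x0 : nat -> R, exists x, is_solution r alpha m x /\ forall j, (j < r)%nat -> x 0 j = x0 j) ->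
  unstable r alpha m (fun j => z * V0 r alpha j).
Proof.
  intros Hr Ha Hz Hh Hd Hcp Hex Hst.
  assert (Hph : 0 < phi r alpha) by (unfold phi; apply prodR_pos; intros; apply Ha; lia).
  set (c' := (c + phi r alpha) / 2).
  destruct (deriv_lower (fhill m) z c c' Hd ltac:(unfold c'; lra)) as [eta [Heta Hf]].
  destruct (prodR_pert alpha r 0) as [B [HB HBp]].
  set (mu := Rmin 1 ((c' - phi r alpha) / (B + 1))).
  assert (Hmu0 : 0 < mu).
  { unfold mu. apply Rmin_glb_lt; [lra|]. apply Rdiv_lt_0_compat; unfold c'; lra. }
  assert (Hmu1 : mu <= 1) by (unfold mu; apply Rmin_l).
  assert (Hmu3 : mu <= (c' - phi r alpha) / (B + 1)) by (unfold mu; apply Rmin_r).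
  set (a := fun i => alpha i + mu).
  assert (Hapos : forall i, (i < r)%nat -> 0 < a i)
    by (intros i Hi; unfold a; specialize (Ha i Hi); lra).
  assert (Hprod : prodR a 0 r <= c').
  { specialize (HBp mu ltac:(rewrite Rabs_right; lra)).
    fold a in HBp. rewrite (Rabs_right mu) in HBp by lra.
    apply Rabs_le_between in HBp.
    assert (H := Rmult_le_compat_r (B + 1) _ _ ltac:(lra) Hmu3).
    replace ((c' - phi r alpha) / (B + 1) * (B + 1)) with (c' - phi r alpha) in H by (field; lra).
    unfold phi in *. nra. }
  assert (HPpos : forall j, (j < r)%nat -> 0 < prodR a 1 j)
    by (intros; apply prodR_pos; intros; apply Hapos; lia).
  set (W := fun j => / prodR a 1 j).
  assert (HWpos : forall j, (j < r)%nat -> 0 < W j) by (intros; unfold W; apply Rinv_0_lt_compat; auto).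
  destruct (fin_ub W r) as [Wmax [HWmax HWmax']].
  destruct (Hst eta Heta) as [delta [Hdelta Hdel]].
  set (K := delta / (4 * Wmax)).
  assert (HK : 0 < K) by (unfold K; apply Rdiv_lt_0_compat; lra).
  assert (HWK : Wmax * K = delta / 4) by (unfold K; field; lra).
  destruct (Hex (fun j => z * V0 r alpha j + 2 * W j * K)) as [x [Hx Hx0]].
  assert (Hin : forall j, (j < r)%nat -> Rabs (x 0 j - z * V0 r alpha j) < delta).
  { intros j Hj. rewrite Hx0 by auto. replace (z * V0 r alpha j + 2 * W j * K - z * V0 r alpha j) with (2 * W j * K) by ring.
    specialize (HWpos j Hj). specialize (HWmax' j Hj). rewrite Rabs_right by nra. nra. }
  specialize (Hdel x Hx Hin).
  assert (Hbar : forall t j, 0 <= t -> (j < r)%nat ->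
     W j * K * exp (mu * t) - (x t j - z * V0 r alpha j) < 0).
  { apply (cont_ind r (fun j t => W j * K * exp (mu * t) - (x t j - z * V0 r alpha j))).
    - intros j t Hj Ht. apply cont_exp_minus.
      apply cont_of_deriv with (l := vfield r alpha m (x t) j).
      apply is_derive_sub_const. apply Hx; auto.
    - intros j Hj. rewrite Rmult_0_r, exp_0, Rmult_1_r, Hx0 by auto.
      specialize (HWpos j Hj). nra.
    - intros t1 Ht1 Hle j Hj. cbv beta in Hle |- *.
      assert (Hle' : forall s j, 0 <= s <= t1 -> (j < r)%nat ->
                W j * K * exp (mu * s) <= x s j - z * V0 r alpha j)
        by (intros s j' Hs Hj'; specialize (Hle s j' Hs Hj'); lra).
      assert (Hdyn := q_dyn r alpha m z x ltac:(lia) Hz Hh Hx).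
      cut (W j * K * exp (mu * t1) < x t1 j - z * V0 r alpha j); [lra|].
      assert (Hu0 : W j * K < x 0 j - z * V0 r alpha j).
      { rewrite Hx0 by auto. specialize (HWpos j Hj). nra. }
      destruct j as [|j'].
      + apply (comp_lower (fun s => x s 0%nat - z * V0 r alpha 0)
          (fun s => fhill m (z + (x s (r - 1)%nat - z * V0 r alpha (r - 1))) - fhill m z)
          (alpha 0%nat) mu (c' * W (r - 1)%nat) (W 0%nat) K t1 Ht1).
        * specialize (Hapos 0%nat ltac:(lia)). unfold a in Hapos. lra.
        * lra.
        * exact HK.
        * intros s Hs. apply (proj1 (Hdyn s ltac:(lra))).
        * intros s Hs. specialize (Hle' s (r - 1)%nat Hs ltac:(lia)).
          specialize (Hdel s ltac:(lra) (r - 1)%nat ltac:(lia)).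
          specialize (HWpos (r - 1)%nat ltac:(lia)).
          assert (0 < W (r - 1)%nat * K * exp (mu * s))
            by (apply Rmult_lt_0_compat; [nra| apply exp_pos]).
          apply Rabs_def2 in Hdel.
          specialize (Hf (x s (r - 1)%nat - z * V0 r alpha (r - 1)) ltac:(split; lra)).
          assert (0 <= c') by (unfold c'; lra). nra.
        * exact Hu0.
        * unfold W. simpl. rewrite Rinv_1, Rmult_1_l.
          rewrite (prodR_first a r) in Hprod by lia.
          specialize (HPpos (r - 1)%nat ltac:(lia)).
          apply Rmult_le_reg_r with (prodR a 1 (r - 1)); [auto|].
          replace (c' * / prodR a 1 (r - 1) * prodR a 1 (r - 1)) with c' by (field; lra).
          replace (alpha 0%nat + mu) with (a 0%nat) by (unfold a; ring). lra.
      + set (j := S j') in *.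
        apply (comp_lower (fun s => x s j - z * V0 r alpha j)
          (fun s => x s (j - 1)%nat - z * V0 r alpha (j - 1))
          (alpha j) mu (W (j - 1)%nat) (W j) K t1 Ht1).
        * specialize (Hapos j Hj). unfold a in Hapos. lra.
        * lra.
        * exact HK.
        * intros s Hs. apply (proj2 (Hdyn s ltac:(lra)) j ltac:(unfold j; lia) Hj).
        * intros s Hs. apply (Hle' s (j - 1)%nat Hs ltac:(lia)).
        * exact Hu0.
        * unfold W. rewrite weights_rel; [| unfold j; lia | apply HPpos; auto | apply HPpos; lia].
          unfold a. lra. }
  set (t := eta / (K * mu)).
  assert (Ht : 0 <= t) by (unfold t; apply Rdiv_le_0_compat; nra).
  specialize (Hbar t 0%nat Ht ltac:(lia)). specialize (Hdel t Ht 0%nat ltac:(lia)).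
  assert (HW0 : W 0%nat = 1) by (unfold W; simpl; apply Rinv_1).
  rewrite HW0 in Hbar. pose proof (exp_ineq1_le (mu * t)).
  assert (HKt : K * (mu * t) = eta) by (unfold t; field; lra).
  apply Rabs_def2 in Hdel. nra.
Qed.

Fixpoint sumN (n : nat) (g : nat -> R) : R :=
  match n with O => 0 | S n' => sumN n' g + g n' end.

Lemma sumN_nonneg (n : nat) (g : nat -> R) : (forall j, (j < n)%nat -> 0 <= g j) -> 0 <= sumN n g.
Proof. induction n; simpl; intros H; [lra|]. pose proof (H n ltac:(lia)). pose proof (IHn ltac:(intros; apply H; lia)). lra. Qed.

Lemma sumN_le (n : nat) (g h : nat -> R) : (forall j, (j < n)%nat -> g j <= h j) -> sumN n g <= sumN n h.
Proof. induction n; simpl; intros H; [lra|]. pose proof (H n ltac:(lia)). pose proof (IHn ltac:(intros; apply H; lia)). lra. Qed.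

Lemma sumN_const (n : nat) (c : R) : sumN n (fun _ => c) = INR n * c.
Proof. induction n; simpl sumN; [simpl; ring|]. rewrite IHn, S_INR. ring. Qed.

Lemma sumN_scal (n : nat) (c : R) (g : nat -> R) : sumN n (fun j => c * g j) = c * sumN n g.
Proof. induction n; simpl; [ring|]. rewrite IHn. ring. Qed.

Lemma sumN_term (n : nat) (g : nat -> R) (i : nat) : (forall j, (j < n)%nat -> 0 <= g j) -> (i < n)%nat -> g i <= sumN n g.
Proof.
  induction n; intros H Hi; [lia|]. simpl.
  destruct (Nat.eq_dec i n) as [->|Hne].
  - pose proof (sumN_nonneg n g ltac:(intros; apply H; lia)). lra.
  - pose proof (H n ltac:(lia)). pose proof (IHn ltac:(intros; apply H; lia) ltac:(lia)). lra.
Qed.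

Lemma Rmax0_lip (u v : R) : Rabs (Rmax 0 u - Rmax 0 v) <= 1 * Rabs (u - v).
Proof.
  rewrite Rmult_1_l. pose proof (Rle_abs (u - v)) as H1. pose proof (Rle_abs (v - u)) as H2.
  rewrite Rabs_minus_sym in H2. apply Rabs_le.
  unfold Rmax; destruct (Rle_dec 0 u); destruct (Rle_dec 0 v); split; lra.
Qed.

Lemma Rmax0_cont (t : R) : continuous (fun s => Rmax 0 s) t.
Proof. apply (lip_cont _ 1). apply Rmax0_lip. Qed.

Lemma eps_cont (g : R -> R) (t : R) :
  (forall eps, 0 < eps -> exists d, 0 < d /\ forall s, Rabs (s - t) < d -> Rabs (g s - g t) < eps) ->
  continuous g t.
Proof.
  intros H. apply continuity_pt_filterlim. intros eps He.
  destruct (H eps He) as [d [Hd Hd']]. exists d. split; [lra|].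
  intros s [_ Hs]. apply Hd'. exact Hs.
Qed.

Lemma integ_deriv (G : R -> R) (t : R) : (forall s, continuous G s) ->
  is_derive (fun t => RInt G 0 t) t (G t).
Proof.
  intros HG. apply (is_derive_RInt G (fun b => RInt G 0 b) 0 t).
  - apply filter_forall. intros b. apply (@RInt_correct R_CompleteNormedModule). apply (@ex_RInt_continuous R_CompleteNormedModule). intros; apply HG.
  - apply HG.
Qed.

Lemma is_derive_const_plus (g : R -> R) (t l c : R) : is_derive g t l -> is_derive (fun s => c + g s) t l.
Proof.
  intros H. assert (H2 := is_derive_plus (fun _ => c) g t 0 l (is_derive_const c t) H).
  replace l with (plus 0 l) by (unfold plus; simpl; ring). exact H2.
Qed.

Lemma RInt_pow (A t : R) (k : nat) : RInt (fun s => A * s ^ k) 0 t = A * t ^ (S k) / INR (S k).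
Proof.
  apply is_RInt_unique.
  assert (HS : INR (S k) <> 0) by (apply not_0_INR; lia).
  assert (H := is_RInt_derive (fun s => A * s ^ (S k) / INR (S k)) (fun s => A * s ^ k) 0 t).
  replace (A * t ^ S k / INR (S k)) with (minus (A * t ^ (S k) / INR (S k)) (A * 0 ^ (S k) / INR (S k))).
  - apply H.
    + intros x _. assert (Hp := derivable_pt_lim_pow x (S k)). apply is_derive_Reals in Hp.
      assert (H2 := is_derive_scal (fun x => x ^ S k) x (A / INR (S k)) _ Hp).
      replace (A * x ^ k) with (scal (A / INR (S k)) (INR (S k) * x ^ Init.Nat.pred (S k))).
      * eapply is_derive_ext; [|exact H2]. intros y. unfold scal; simpl. unfold mult; simpl. field. auto.
      * unfold scal; simpl. unfold mult; simpl. field. auto.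
    + intros x _. apply (@ex_derive_continuous R_AbsRing R_NormedModule (fun s => A * s ^ k)). auto_derive; auto.
  - unfold minus, plus, opp; simpl. unfold Rdiv. ring.
Qed.

Lemma RInt_abs_le (g h : R -> R) (a b : R) : a <= b -> ex_RInt g a b -> ex_RInt h a b ->
  (forall s, a < s < b -> Rabs (g s) <= h s) -> Rabs (RInt g a b) <= RInt h a b.
Proof.
  intros Hab Hg Hh H. apply Rabs_le. split.
  - assert (Ho := RInt_opp h a b Hh). unfold opp in Ho; simpl in Ho.
    assert (RInt (fun x => - h x) a b <= RInt g a b).
    { apply RInt_le; auto.
      - apply (ex_RInt_opp h a b) in Hh. exact Hh.
      - intros s Hs. specialize (H s Hs). apply Rabs_le_between in H. lra. }
    rewrite Ho in H0. lra.
  - apply RInt_le; auto. intros s Hs. specialize (H s Hs). apply Rabs_le_between in H. lra.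
Qed.

Lemma RInt_abs_const (g : R -> R) (t M : R) : ex_RInt g 0 t ->
  (forall s, Rmin 0 t <= s <= Rmax 0 t -> Rabs (g s) <= M) -> Rabs (RInt g 0 t) <= Rabs t * M.
Proof.
  intros Hg H. destruct (Rle_dec 0 t) as [Ht|Ht].
  - rewrite Rmin_left, Rmax_right in H by lra. rewrite (Rabs_right t) by lra.
    replace t with (t - 0) at 2 by ring. apply abs_RInt_le_const; auto.
  - rewrite Rmin_right, Rmax_left in H by lra. rewrite (Rabs_left t) by lra.
    rewrite <- (opp_RInt_swap g t 0) by (apply ex_RInt_swap; auto).
    unfold opp; simpl. rewrite Rabs_Ropp. replace (- t) with (0 - t) by ring.
    apply abs_RInt_le_const; auto; [lra| apply ex_RInt_swap; auto].
Qed.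

Lemma exp_series (x : R) : is_series (fun k => x ^ k / INR (fact k)) (exp x).
Proof.
  assert (H := is_exp_Reals x). unfold is_pseries in H. eapply is_series_ext; [|exact H].
  intros n. cbv beta. rewrite pow_n_pow. change (scal (x ^ n) (/ INR (fact n))) with (x ^ n * / INR (fact n)). reflexivity.
Qed.

Lemma fact_mul (n k : nat) : (fact n * fact k <= fact (n + k))%nat.
Proof.
  induction k as [|k IH].
  - simpl. rewrite Nat.add_0_r. lia.
  - replace (n + S k)%nat with (S (n + k)) by lia. simpl (fact (S k)). simpl (fact (S (n + k))).
    assert (fact k <= fact n * fact k)%nat by (pose proof (lt_O_fact n); nia). nia.
Qed.

Section Exist.
Variable r : nat.
Variable alpha : nat -> R.
Variable m : R.
Variable x0 : nat -> R.
Hypothesis Hr : (1 <= r)%nat.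
Hypothesis Hm : 1 <= m.

Definition Fv (y : nat -> R) (j : nat) : R := vfield r alpha m y j.
Definition Lc : R := m + 1 + sumN r (fun i => Rabs (alpha i)).

Lemma Fv_ext (y y' : nat -> R) (j : nat) : (forall i, y i = y' i) -> Fv y j = Fv y' j.
Proof. intros H. unfold Fv, vfield. destruct j; rewrite !H; reflexivity. Qed.

Lemma Fv_lip (y y' : nat -> R) (j : nat) : (j < r)%nat ->
  Rabs (Fv y j - Fv y' j) <= Lc * sumN r (fun i => Rabs (y i - y' i)).
Proof.
  intros Hj. unfold Fv, vfield, Lc.
  set (Sm := sumN r (fun i => Rabs (y i - y' i))).
  set (A := sumN r (fun i => Rabs (alpha i))).
  assert (HS : forall i, (i < r)%nat -> Rabs (y i - y' i) <= Sm)
    by (intros i Hi; apply (sumN_term r (fun i => Rabs (y i - y' i))); auto; intros; apply Rabs_pos).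
  assert (HA : forall i, (i < r)%nat -> Rabs (alpha i) <= A)
    by (intros i Hi; apply (sumN_term r (fun i => Rabs (alpha i))); auto; intros; apply Rabs_pos).
  assert (HS0 : 0 <= Sm) by (unfold Sm; apply sumN_nonneg; intros; apply Rabs_pos).
  assert (HA0 : 0 <= A) by (unfold A; apply sumN_nonneg; intros; apply Rabs_pos).
  destruct j as [|j'].
  - replace (fhill m (y (r - 1)%nat) - alpha 0%nat * y 0%nat - (fhill m (y' (r - 1)%nat) - alpha 0%nat * y' 0%nat))
      with ((fhill m (y (r - 1)%nat) - fhill m (y' (r - 1)%nat)) - alpha 0%nat * (y 0%nat - y' 0%nat)) by ring.
    eapply Rle_trans; [apply Rabs_triang|]. rewrite Rabs_Ropp, Rabs_mult.
    pose proof (fhill_lip m (y (r - 1)%nat) (y' (r - 1)%nat) Hm).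
    pose proof (HS (r - 1)%nat ltac:(lia)). pose proof (HS 0%nat ltac:(lia)).
    pose proof (HA 0%nat ltac:(lia)). pose proof (Rabs_pos (alpha 0%nat)).
    pose proof (Rabs_pos (y 0%nat - y' 0%nat)). nra.
  - replace (y j' - alpha (S j') * y (S j') - (y' j' - alpha (S j') * y' (S j')))
      with ((y j' - y' j') - alpha (S j') * (y (S j') - y' (S j'))) by ring.
    eapply Rle_trans; [apply Rabs_triang|]. rewrite Rabs_Ropp, Rabs_mult.
    pose proof (HS j' ltac:(lia)). pose proof (HS (S j') ltac:(lia)).
    pose proof (HA (S j') ltac:(lia)). pose proof (Rabs_pos (alpha (S j'))).
    pose proof (Rabs_pos (y (S j') - y' (S j'))). nra.
Qed.

Lemma Lc_pos : 1 <= Lc.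
Proof. unfold Lc. pose proof (sumN_nonneg r (fun i => Rabs (alpha i)) ltac:(intros; apply Rabs_pos)). lra. Qed.

Lemma Fv_cont (g : R -> nat -> R) (t : R) (j : nat) : (j < r)%nat ->
  (forall i, (i < r)%nat -> continuous (fun s => g s i) t) -> continuous (fun s => Fv (g s) j) t.
Proof.
  intros Hj Hg. apply continuity_pt_filterlim. unfold Fv, vfield. destruct j as [|j'].
  - apply continuity_pt_minus.
    + apply (continuity_pt_comp (fun s => g s (r - 1)%nat) (fhill m)).
      * apply continuity_pt_filterlim. apply Hg. lia.
      * apply continuity_pt_filterlim. apply (lip_cont _ m). intros; apply fhill_lip; auto.
    + apply (continuity_pt_mult (fun _ => alpha 0%nat) (fun s => g s 0%nat)).
      * apply continuity_pt_const. intros ? ?; reflexivity.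
      * apply continuity_pt_filterlim. apply Hg. lia.
  - apply continuity_pt_minus.
    + apply continuity_pt_filterlim. apply Hg. lia.
    + apply (continuity_pt_mult (fun _ => alpha (S j')) (fun s => g s (S j'))).
      * apply continuity_pt_const. intros ? ?; reflexivity.
      * apply continuity_pt_filterlim. apply Hg. lia.
Qed.

Fixpoint Pic (n : nat) : R -> nat -> R :=
  match n with
  | O => fun _ j => x0 j
  | S n' => fun t j => x0 j + RInt (fun s => Fv (Pic n' (Rmax 0 s)) j) 0 t
  end.

Lemma Pic_cont_deriv (n : nat) : forall i, (i < r)%nat ->
  (forall t, continuous (fun s => Pic n s i) t) /\
  (forall t, is_derive (fun s => Pic (S n) s i) t (Fv (Pic n (Rmax 0 t)) i)).
Proof.
  induction n as [|n IH]; intros i Hi.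
  - assert (Hd : forall t, is_derive (fun s => Pic 1 s i) t (Fv (Pic 0 (Rmax 0 t)) i)).
    { intros t. apply is_derive_const_plus. apply (integ_deriv (fun s => Fv (Pic 0 (Rmax 0 s)) i)).
      intros s. apply continuous_const. }
    split; [intros t; apply continuous_const| exact Hd].
  - assert (Hc : forall t, continuous (fun s => Pic (S n) s i) t).
    { intros t. apply cont_of_deriv with (l := Fv (Pic n (Rmax 0 t)) i). apply (proj2 (IH i Hi)). }
    split; [exact Hc|].
    intros t. apply is_derive_const_plus. apply (integ_deriv (fun s => Fv (Pic (S n) (Rmax 0 s)) i)).
    intros s. apply (Fv_cont (fun s => Pic (S n) (Rmax 0 s))); auto.
    intros k Hk. apply (continuous_comp (fun s => Rmax 0 s) (fun u => Pic (S n) u k)).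
    + apply Rmax0_cont.
    + assert (Hck : forall t, continuous (fun s => Pic (S n) s k) t).
      { intros t'. apply cont_of_deriv with (l := Fv (Pic n (Rmax 0 t')) k). apply (proj2 (IH k Hk)). }
      apply Hck.
Qed.

Lemma Pic_at0 (n : nat) (i : nat) : Pic n 0 i = x0 i.
Proof. destruct n; simpl; [reflexivity|]. rewrite RInt_point. unfold zero; simpl; ring. Qed.

Lemma Pic_neg (n : nat) (t : R) (i : nat) : t <= 0 -> Pic (S (S n)) t i = Pic (S n) t i.
Proof.
  intros Ht.
  change (Pic (S (S n)) t i) with (x0 i + RInt (fun s => Fv (Pic (S n) (Rmax 0 s)) i) 0 t).
  change (Pic (S n) t i) with (x0 i + RInt (fun s => Fv (Pic n (Rmax 0 s)) i) 0 t).
  f_equal. apply RInt_ext. intros s Hs.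
  rewrite Rmin_right, Rmax_left in Hs by lra. rewrite Rmax_left by lra.
  apply Fv_ext. intros k. rewrite !Pic_at0. reflexivity.
Qed.

Lemma Pic_cont (n i : nat) (t : R) : (i < r)%nat -> continuous (fun s => Pic n s i) t.
Proof. intros Hi. apply (proj1 (Pic_cont_deriv n i Hi)). Qed.

Lemma G_cont (n i : nat) (t : R) : (i < r)%nat -> continuous (fun s => Fv (Pic n (Rmax 0 s)) i) t.
Proof.
  intros Hi. apply (Fv_cont (fun s => Pic n (Rmax 0 s))); auto.
  intros k Hk. apply (continuous_comp (fun s => Rmax 0 s) (fun u => Pic n u k)).
  - apply Rmax0_cont.
  - apply Pic_cont; auto.
Qed.

Lemma G_ex (n i : nat) (a b : R) : (i < r)%nat -> ex_RInt (fun s => Fv (Pic n (Rmax 0 s)) i) a b.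
Proof. intros Hi. apply (@ex_RInt_continuous R_CompleteNormedModule). intros; apply G_cont; auto. Qed.

Definition Dn (n : nat) (t : R) : R := sumN r (fun j => Rabs (Pic (S n) t j - Pic n t j)).
Definition S0 : R := sumN r (fun j => Rabs (Fv x0 j)).
Definition Kc : R := INR r * Lc.

Lemma S0_nonneg : 0 <= S0.
Proof. unfold S0. apply sumN_nonneg. intros; apply Rabs_pos. Qed.

Lemma Kc_pos : 0 < Kc.
Proof. unfold Kc. pose proof Lc_pos. assert (0 < INR r) by (apply lt_0_INR; lia). nra. Qed.

Lemma D_bound (n : nat) : forall t, Dn n t <= S0 * Kc ^ n * Rabs t ^ (S n) / INR (fact (S n)).
Proof.
  induction n as [|n IH]; intros t.
  - unfold Dn. apply Rle_trans with (sumN r (fun j => Rabs t * Rabs (Fv x0 j))).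
    + apply sumN_le. intros j Hj.
      change (Pic 1 t j - Pic 0 t j) with (x0 j + RInt (fun s => Fv x0 j) 0 t - x0 j).
      rewrite RInt_const. unfold scal; simpl. unfold mult; simpl.
      replace (x0 j + (t - 0) * Fv x0 j - x0 j) with (t * Fv x0 j) by ring.
      rewrite Rabs_mult. lra.
    + rewrite sumN_scal. fold S0. simpl. lra.
  - intros. destruct (Rle_dec t 0) as [Ht|Ht].
    + unfold Dn. apply Rle_trans with (sumN r (fun _ => 0)).
      * apply sumN_le. intros j Hj. rewrite Pic_neg by auto. rewrite Rminus_diag, Rabs_R0. lra.
      * rewrite sumN_const, Rmult_0_r. apply Rdiv_le_0_compat; [|apply lt_0_INR, lt_O_fact].
        apply Rmult_le_pos; [apply Rmult_le_pos; [apply S0_nonneg| apply pow_le; pose proof Kc_pos; lra]|].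
        apply pow_le, Rabs_pos.
    + set (A := Lc * (S0 * Kc ^ n / INR (fact (S n)))).
      unfold Dn. apply Rle_trans with (sumN r (fun _ => A * t ^ (S (S n)) / INR (S (S n)))).
      * apply sumN_le. intros j Hj.
        change (Pic (S (S n)) t j - Pic (S n) t j) with
          ((x0 j + RInt (fun s => Fv (Pic (S n) (Rmax 0 s)) j) 0 t) - (x0 j + RInt (fun s => Fv (Pic n (Rmax 0 s)) j) 0 t)).
        replace ((x0 j + RInt (fun s => Fv (Pic (S n) (Rmax 0 s)) j) 0 t) - (x0 j + RInt (fun s => Fv (Pic n (Rmax 0 s)) j) 0 t))
          with (RInt (fun s => Fv (Pic (S n) (Rmax 0 s)) j - Fv (Pic n (Rmax 0 s)) j) 0 t).
        2:{ rewrite (RInt_minus (fun s => Fv (Pic (S n) (Rmax 0 s)) j) (fun s => Fv (Pic n (Rmax 0 s)) j)) by (apply G_ex; auto).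
            unfold minus, plus, opp; simpl. ring. }
        rewrite <- RInt_pow. apply RInt_abs_le; [lra| | |].
        -- apply (@ex_RInt_continuous R_CompleteNormedModule). intros z _.
           apply (continuous_minus (fun s => Fv (Pic (S n) (Rmax 0 s)) j) (fun s => Fv (Pic n (Rmax 0 s)) j));
           apply G_cont; auto.
        -- apply (@ex_RInt_continuous R_CompleteNormedModule). intros z _.
           apply (@ex_derive_continuous R_AbsRing R_NormedModule (fun s => A * s ^ S n)). auto_derive; auto.
        -- intros s Hs. rewrite Rmax_right by lra.
           eapply Rle_trans; [apply Fv_lip; auto|]. fold (Dn n s).
           specialize (IH s). rewrite (Rabs_right s) in IH by lra. unfold A.
           pose proof Lc_pos. apply Rle_trans with (Lc * (S0 * Kc ^ n * s ^ S n / INR (fact (S n)))).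
           ++ apply Rmult_le_compat_l; lra.
           ++ right. field. apply INR_fact_neq_0.
      * rewrite sumN_const. unfold A. rewrite (Rabs_right t) by lra.
        change (fact (S (S n))) with (S (S n) * fact (S n))%nat. rewrite mult_INR.
        unfold Kc. simpl pow. right. field. split; [apply INR_fact_neq_0| apply not_0_INR; lia].
Qed.

Definition ee (k : nat) (T : R) : R := S0 * T * (Kc * T) ^ k / INR (fact k).

Lemma D_le_e (k : nat) (t T : R) : Rabs t <= T -> Dn k t <= ee k T.
Proof.
  intros Ht. eapply Rle_trans; [apply D_bound|]. unfold ee.
  assert (HT : 0 <= T) by (pose proof (Rabs_pos t); lra).
  assert (Hf : INR (fact k) <= INR (fact (S k))) by (apply le_INR; simpl; lia).
  assert (Hf0 : 0 < INR (fact k)) by (apply lt_0_INR, lt_O_fact).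
  assert (Hp : Rabs t ^ S k <= T ^ S k) by (apply pow_incr; split; [apply Rabs_pos| auto]).
  rewrite Rpow_mult_distr. simpl (T ^ S k) in Hp.
  pose proof S0_nonneg. pose proof Kc_pos.
  assert (HK : 0 <= Kc ^ k) by (apply pow_le; lra).
  assert (HTk : 0 <= T ^ k) by (apply pow_le; lra).
  assert (Hrr : 0 <= Rabs t ^ S k) by (apply pow_le, Rabs_pos).
  unfold Rdiv. apply Rle_trans with (S0 * Kc ^ k * Rabs t ^ S k * / INR (fact k)).
  - apply Rmult_le_compat_l; [apply Rmult_le_pos; [apply Rmult_le_pos|]; auto|].
    apply Rinv_le_contravar; auto.
  - apply Rmult_le_compat_r; [left; apply Rinv_0_lt_compat; auto|].
    replace (S0 * T * (Kc ^ k * T ^ k)) with (S0 * Kc ^ k * (T * T ^ k)) by ring.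
    apply Rmult_le_compat_l; [apply Rmult_le_pos; auto| auto].
Qed.

Lemma ee_series (T : R) : is_series (fun k => ee k T) (S0 * T * exp (Kc * T)).
Proof.
  assert (H := is_series_scal (S0 * T) _ _ (exp_series (Kc * T))).
  eapply is_series_ext; [|exact H]. intros n. unfold ee, scal; simpl; unfold mult; simpl. unfold Rdiv. ring.
Qed.

Lemma d_le (k j : nat) (t T : R) : (j < r)%nat -> Rabs t <= T -> Rabs (Pic (S k) t j - Pic k t j) <= ee k T.
Proof.
  intros Hj Ht. eapply Rle_trans; [|apply D_le_e; eauto]. unfold Dn.
  apply (sumN_term r (fun j => Rabs (Pic (S k) t j - Pic k t j))); auto. intros; apply Rabs_pos.
Qed.

Definition xs (t : R) (j : nat) : R := x0 j + Series (fun k => Pic (S k) t j - Pic k t j).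

Lemma Pic_tele (n j : nat) (t : R) : Pic (S n) t j = x0 j + sum_f_R0 (fun k => Pic (S k) t j - Pic k t j) n.
Proof.
  induction n as [|n IH].
  - cbn [sum_f_R0]. change (Pic 0 t j) with (x0 j). ring.
  - cbn [sum_f_R0]. rewrite <- Rplus_assoc, <- IH. ring.
Qed.

Definition tl (n : nat) (T : R) : R := S0 * T * (Kc * T) ^ (S n) / INR (fact (S n)) * exp (Kc * T).

Lemma tail_bound (n j : nat) (t T : R) : (j < r)%nat -> Rabs t <= T ->
  Rabs (xs t j - Pic (S n) t j) <= tl n T.
Proof.
  intros Hj Ht. assert (HT : 0 <= T) by (pose proof (Rabs_pos t); lra).
  set (d := fun k => Pic (S k) t j - Pic k t j).
  assert (Hexd : ex_series d).
  { apply (ex_series_le d (fun k => ee k T)).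
    - intros k. apply (d_le k j t T Hj Ht).
    - exists (S0 * T * exp (Kc * T)). apply ee_series. }
  assert (Hsplit := Series_incr_n d (S n) ltac:(lia) Hexd). simpl pred in Hsplit.
  unfold xs. fold d. rewrite Pic_tele. fold d.
  replace (x0 j + Series d - (x0 j + sum_f_R0 d n)) with (Series (fun k => d (S n + k)%nat)) by (rewrite Hsplit; ring).
  set (c := S0 * T * (Kc * T) ^ (S n) / INR (fact (S n))).
  assert (Hc : 0 <= c).
  { unfold c. pose proof S0_nonneg. pose proof Kc_pos. apply Rdiv_le_0_compat; [|apply lt_0_INR, lt_O_fact].
    apply Rmult_le_pos; [apply Rmult_le_pos; auto| apply pow_le; nra]. }
  set (b := fun k => c * ((Kc * T) ^ k / INR (fact k))).
  assert (Hb : is_series b (c * exp (Kc * T))).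
  { apply (is_series_scal c _ _ (exp_series (Kc * T))). }
  assert (Hdb : forall k, 0 <= Rabs (d (S n + k)%nat) <= b k).
  { intros k. split; [apply Rabs_pos|]. eapply Rle_trans; [apply (d_le _ j t T Hj Ht)|].
    unfold ee, b, c. pose proof S0_nonneg. pose proof Kc_pos.
    assert (Hf := fact_mul (S n) k). apply le_INR in Hf. rewrite mult_INR in Hf.
    assert (Hf1 : 0 < INR (fact (S n))) by (apply lt_0_INR, lt_O_fact).
    assert (Hf2 : 0 < INR (fact k)) by (apply lt_0_INR, lt_O_fact).
    rewrite pow_add.
    assert (HP : 0 <= S0 * T * ((Kc * T) ^ S n * (Kc * T) ^ k))
      by (apply Rmult_le_pos; [apply Rmult_le_pos; auto| apply Rmult_le_pos; apply pow_le; nra]).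
    replace (S0 * T * (Kc * T) ^ S n / INR (fact (S n)) * ((Kc * T) ^ k / INR (fact k)))
      with (S0 * T * ((Kc * T) ^ S n * (Kc * T) ^ k) / (INR (fact (S n)) * INR (fact k)))
      by (field; lra).
    unfold Rdiv. apply Rmult_le_compat_l; auto. apply Rinv_le_contravar; [nra| auto]. }
  assert (Hexb : ex_series b) by (eexists; exact Hb).
  eapply Rle_trans; [apply Series_Rabs|].
  { apply (@ex_series_le R_AbsRing R_CompleteNormedModule _ b); auto. intros k. unfold norm; simpl; unfold abs; simpl. rewrite Rabs_Rabsolu. apply Hdb. }
  eapply Rle_trans; [apply Series_le; eauto|].
  rewrite (is_series_unique _ _ Hb). unfold tl. fold c. lra.
Qed.

Lemma tl_small (T : R) : 0 <= T -> forall eps, 0 < eps -> exists N, forall n, (N <= n)%nat -> tl n T < eps.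
Proof.
  intros HT eps He.
  set (C := S0 * T * exp (Kc * T)).
  assert (HC : 0 <= C) by (unfold C; pose proof S0_nonneg; pose proof (exp_pos (Kc * T)); apply Rmult_le_pos; [apply Rmult_le_pos|]; lra).
  destruct (cv_speed_pow_fact (Kc * T) (eps / (C + 1)) ltac:(apply Rdiv_lt_0_compat; lra)) as [N HN].
  exists N. intros n Hn. specialize (HN (S n) ltac:(lia)). unfold R_dist in HN. rewrite Rminus_0_r in HN.
  set (u := (Kc * T) ^ S n / INR (fact (S n))) in *.
  assert (Hu : 0 <= u).
  { unfold u. apply Rdiv_le_0_compat; [apply pow_le; pose proof Kc_pos; nra| apply lt_0_INR, lt_O_fact]. }
  rewrite Rabs_right in HN by lra.
  replace (tl n T) with (C * u) by (unfold tl, C, u; field; apply INR_fact_neq_0).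
  assert (C * u <= C * (eps / (C + 1))) by (apply Rmult_le_compat_l; lra).
  assert (C * (eps / (C + 1)) < eps).
  { apply Rmult_lt_reg_r with (C + 1); [lra|].
    replace (C * (eps / (C + 1)) * (C + 1)) with (C * eps) by (field; lra). nra. }
  lra.
Qed.

Lemma xs_cont (t : R) (j : nat) : (j < r)%nat -> continuous (fun s => xs s j) t.
Proof.
  intros Hj. apply eps_cont. intros eps He.
  set (T := Rabs t + 1).
  assert (HT : 0 <= T) by (unfold T; pose proof (Rabs_pos t); lra).
  destruct (tl_small T HT (eps / 3) ltac:(lra)) as [N HN].
  destruct (cont_eps _ t (Pic_cont (S N) j t Hj) (eps / 3) ltac:(lra)) as [d [Hd Hd']].
  exists (Rmin d 1). split; [apply Rmin_glb_lt; lra|].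
  intros s Hs.
  assert (Hs1 : Rabs (s - t) < d) by (pose proof (Rmin_l d 1); lra).
  assert (Hs2 : Rabs (s - t) < 1) by (pose proof (Rmin_r d 1); lra).
  assert (HsT : Rabs s <= T).
  { unfold T. replace s with ((s - t) + t) by ring. eapply Rle_trans; [apply Rabs_triang|]. lra. }
  assert (HtT : Rabs t <= T) by (unfold T; lra).
  pose proof (tail_bound N j s T Hj HsT). pose proof (tail_bound N j t T Hj HtT).
  specialize (Hd' s Hs1). specialize (HN N ltac:(lia)).
  replace (xs s j - xs t j) with ((xs s j - Pic (S N) s j) + (Pic (S N) s j - Pic (S N) t j) - (xs t j - Pic (S N) t j)) by ring.
  pose proof (Rabs_triang (xs s j - Pic (S N) s j + (Pic (S N) s j - Pic (S N) t j)) (- (xs t j - Pic (S N) t j))).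
  pose proof (Rabs_triang (xs s j - Pic (S N) s j) (Pic (S N) s j - Pic (S N) t j)).
  rewrite Rabs_Ropp in *. unfold Rminus at 1. lra.
Qed.

Lemma H_cont (j : nat) (t : R) : (j < r)%nat -> continuous (fun s => Fv (xs (Rmax 0 s)) j) t.
Proof.
  intros Hj. apply (Fv_cont (fun s => xs (Rmax 0 s))); auto.
  intros k Hk. apply (continuous_comp (fun s => Rmax 0 s) (fun u => xs u k)).
  - apply Rmax0_cont.
  - apply xs_cont; auto.
Qed.

Lemma xs_int (t : R) (j : nat) : (j < r)%nat ->
  xs t j = x0 j + RInt (fun s => Fv (xs (Rmax 0 s)) j) 0 t.
Proof.
  intros Hj.
  set (H := fun s => Fv (xs (Rmax 0 s)) j).
  set (A := xs t j - (x0 j + RInt H 0 t)).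
  cut (A = 0); [unfold A; lra|].
  set (T := Rabs t). assert (HT : 0 <= T) by apply Rabs_pos.
  set (Q := 1 + T * (Lc * INR r)).
  assert (HQ : 1 <= Q) by (unfold Q; pose proof Lc_pos; pose proof (pos_INR r); assert (0 <= T * (Lc * INR r)) by (apply Rmult_le_pos; nra); lra).
  assert (Hsmall : forall eps, 0 < eps -> Rabs A < eps).
  { intros eps He.
    destruct (tl_small T HT (eps / Q) ltac:(apply Rdiv_lt_0_compat; lra)) as [N HN].
    set (G := fun s => Fv (Pic (S N) (Rmax 0 s)) j).
    assert (HPic : Pic (S (S N)) t j = x0 j + RInt G 0 t) by reflexivity.
    assert (HA : A = (xs t j - Pic (S (S N)) t j) + RInt (fun s => G s - H s) 0 t).
    { rewrite HPic. unfold A.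
      rewrite (RInt_minus G H).
      - unfold minus, plus, opp; simpl. ring.
      - apply G_ex; auto.
      - apply (@ex_RInt_continuous R_CompleteNormedModule). intros; apply H_cont; auto. }
    assert (H1 := tail_bound (S N) j t T Hj ltac:(unfold T; lra)).
    assert (H2 : Rabs (RInt (fun s => G s - H s) 0 t) <= Rabs t * (Lc * (INR r * tl N T))).
    { apply RInt_abs_const.
      - apply (@ex_RInt_continuous R_CompleteNormedModule). intros z _.
        apply (continuous_minus G H); [apply G_cont; auto| apply H_cont; auto].
      - intros s Hs. unfold G, H.
        eapply Rle_trans; [apply Fv_lip; auto|]. apply Rmult_le_compat_l; [pose proof Lc_pos; lra|].
        rewrite <- sumN_const. apply sumN_le. intros i Hi. rewrite Rabs_minus_sym.
        apply tail_bound; auto. unfold T.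
        unfold Rmax. destruct (Rle_dec 0 s).
        + unfold Rmin, Rmax in Hs. destruct (Rle_dec 0 t); rewrite Rabs_right by lra;
          [rewrite Rabs_right by lra; lra| rewrite Rabs_left by lra; lra].
        + rewrite Rabs_R0. apply Rabs_pos. }
    specialize (HN N ltac:(lia)) as HN0. specialize (HN (S N) ltac:(lia)) as HN1.
    rewrite HA. eapply Rle_lt_trans; [apply Rabs_triang|].
    fold T in H2.
    assert (T * (Lc * (INR r * tl N T)) <= T * (Lc * INR r) * (eps / Q)).
    { replace (T * (Lc * (INR r * tl N T))) with (T * (Lc * INR r) * tl N T) by ring.
      apply Rmult_le_compat_l; [|lra]. pose proof Lc_pos; pose proof (pos_INR r).
      apply Rmult_le_pos; nra. }
    assert (eps / Q + T * (Lc * INR r) * (eps / Q) = eps).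
    { replace (eps / Q + T * (Lc * INR r) * (eps / Q)) with (eps / Q * Q) by (unfold Q; ring). field. lra. }
    lra. }
  destruct (Req_dec A 0) as [|HA]; [auto|].
  specialize (Hsmall (Rabs A) (Rabs_pos_lt A HA)). lra.
Qed.

Lemma xs_deriv (t : R) (j : nat) : (j < r)%nat ->
  is_derive (fun s => xs s j) t (Fv (xs (Rmax 0 t)) j).
Proof.
  intros Hj.
  apply (is_derive_ext (fun s => x0 j + RInt (fun u => Fv (xs (Rmax 0 u)) j) 0 s)).
  - intros s. symmetry. apply xs_int; auto.
  - apply is_derive_const_plus. apply (integ_deriv (fun u => Fv (xs (Rmax 0 u)) j)).
    intros; apply H_cont; auto.
Qed.

Lemma existence_sec : exists x, is_solution r alpha m x /\ forall j, (j < r)%nat -> x 0 j = x0 j.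
Proof.
  exists xs. split.
  - intros t Ht j Hj. assert (H := xs_deriv t j Hj). rewrite Rmax_right in H by lra. exact H.
  - intros j Hj. rewrite xs_int by auto. rewrite RInt_point. unfold zero; simpl. ring.
Qed.

End Exist.

Lemma existence (r : nat) (alpha : nat -> R) (m : R) : (1 <= r)%nat -> 1 <= m ->
  forall x0 : nat -> R, exists x, is_solution r alpha m x /\ forall j, (j < r)%nat -> x 0 j = x0 j.
Proof. intros Hr Hm x0. apply existence_sec; auto. Qed.


Theorem lemma6p2 (r : nat) (alpha : nat -> R) (m z : R) :
  (2 <= r)%nat ->
  (forall i, (i < r)%nat -> 0 < alpha i) ->
  1 <= m ->
  z <> 0 ->
  hfun m z = phi r alpha ->
  (0 < z ->
     (forall d, is_derive (hfun m) z d -> d < 0 ->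
        asymp_stable r alpha m (fun j => z * V0 r alpha j)) /\
     (forall d, is_derive (hfun m) z d -> 0 < d ->
        unstable r alpha m (fun j => z * V0 r alpha j))) /\
  (z < 0 ->
     (forall d, is_derive (hfun m) z d -> 0 < d ->
        asymp_stable r alpha m (fun j => z * V0 r alpha j)) /\
     (forall d, is_derive (hfun m) z d -> d < 0 ->
        unstable r alpha m (fun j => z * V0 r alpha j))).
Proof.
  intros Hr Ha Hm Hz Hh.
  assert (Hc : forall d, is_derive (hfun m) z d ->
     is_derive (fhill m) z (phi r alpha + z * d) /\ 0 <= phi r alpha + z * d).
  { intros d Hd. assert (H := fhill_deriv m z d Hz Hd). rewrite Hh in H. split; auto.
    apply (deriv_nonneg (fhill m) z _ H). apply fhill_locmono; auto. }
  assert (Hex := existence r alpha m ltac:(lia) Hm).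
  split; intros Hs; split; intros d Hd Hsd; destruct (Hc d Hd) as [H1 H2].
  - apply (stable_main r alpha m z (phi r alpha + z * d)); auto. nra.
  - apply (unstable_main r alpha m z (phi r alpha + z * d)); auto. nra.
  - apply (stable_main r alpha m z (phi r alpha + z * d)); auto. nra.
  - apply (unstable_main r alpha m z (phi r alpha + z * d)); auto. nra.
Qed.
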